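(* Every orbit in $\mathbf B_{IX}$ has a non-empty $\omega$-limit set, and this set is contained in $\overline{\mathbf B}_{\mathrm{VII}_0}$, the closure of the union of the three Bianchi type $\mathrm{VII}_0$ subsets.
   Context: Fix $w$ with $-\tfrac13<w<1$. Variables $(\bar H,\bar\Sigma_1,\bar\Sigma_2,\bar\Sigma_3,\bar N_1,\bar N_2,\bar N_3)\in\mathbb R^7$; set $\bar\Sigma^2=\tfrac16(\bar\Sigma_1^2+\bar\Sigma_2^2+\bar\Sigma_3^2)$ and $\bar\Omega=1-\bar\Sigma^2-\tfrac1{12}(\bar N_1^2+\bar N_2^2+\bar N_3^2)$. Admissible states satisfy $\bar\Sigma_1+\bar\Sigma_2+\bar\Sigma_3=0$, $\bar H^2+\tfrac16(\bar N_1\bar N_2+\bar N_1\bar N_3+\bar N_2\bar N_3)=1$, $\bar\Omega\ge0$. The dynamics in the time $\tau$ (increasing towards the past singularity) is $\frac{d\bar H}{d\tau}=\bar q(1-\bar H^2)-\bar F\bar H$, $\frac{d\bar\Sigma_\alpha}{d\tau}=\bar\Sigma_\alpha[(2-\bar q)\bar H-\bar F]+{}^3\bar S_\alpha$, $\frac{d\bar N_\alpha}{d\tau}=-\bar N_\alpha[\bar q\bar H+2\bar\Sigma_\alpha+\bar F]$ (no sum), with $\bar q=2\bar\Sigma^2+\tfrac12(1+3w)\bar\Omega$, $\bar F=\tfrac16(\bar N_1\bar N_2\bar\Sigma_3+\bar N_1\bar\Sigma_2\bar N_3+\bar\Sigma_1\bar N_2\bar N_3)$, ${}^3\bar S_\alpha=\tfrac13[\bar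 N_\alpha(2\bar N_\alpha-\bar N_\beta-\bar N_\gamma)-(\bar N_\beta-\bar N_\gamma)^2]$ for $(\alpha\beta\gamma)\in\{(123),(231),(312)\}$. $\mathbf B_{IX}=\{\bar N_1,\bar N_2,\bar N_3>0,\ \bar H>0,\ \bar\Omega\ge0\}$ (with the constraints), invariant for increasing $\tau$. $\omega$-limit sets are taken as $\tau\to+\infty$. The Bianchi $\mathrm{VII}_0$ subsets are $\mathcal B_{\bar N_\alpha\bar N_\beta}=\{\bar N_\alpha>0,\bar N_\beta>0,\bar N_\gamma=0,\bar H>0,\bar\Omega\ge0\}$ for $(\alpha\beta\gamma)\in\{(123),(231),(312)\}$, and $\mathbf B_{\mathrm{VII}_0}$ is their union. *)

(* Defs.v *)
From Stdlib Require Import Reals Lra.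
Open Scope R_scope.

(* A state (Hbar, Sigma1, Sigma2, Sigma3, N1, N2, N3) in R^7. *)
Record st : Type := mkst {
  sH : R; sS1 : R; sS2 : R; sS3 : R; sN1 : R; sN2 : R; sN3 : R }.

Definition Sig2 (p : st) : R :=
  / 6 * (sS1 p ^ 2 + sS2 p ^ 2 + sS3 p ^ 2).

Definition Omega (p : st) : R :=
  1 - Sig2 p - / 12 * (sN1 p ^ 2 + sN2 p ^ 2 + sN3 p ^ 2).

Definition qbar (w : R) (p : st) : R :=
  2 * Sig2 p + / 2 * (1 + 3 * w) * Omega p.

Definition Fbar (p : st) : R :=
  / 6 * (sN1 p * sN2 p * sS3 p + sN1 p * sS2 p * sN3 p + sS1 p * sN2 p * sN3 p).

(* 3S_alpha for (alpha beta gamma) = (123), (231), (312) *)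
Definition S3_1 (p : st) : R :=
  / 3 * (sN1 p * (2 * sN1 p - sN2 p - sN3 p) - (sN2 p - sN3 p) ^ 2).
Definition S3_2 (p : st) : R :=
  / 3 * (sN2 p * (2 * sN2 p - sN3 p - sN1 p) - (sN3 p - sN1 p) ^ 2).
Definition S3_3 (p : st) : R :=
  / 3 * (sN3 p * (2 * sN3 p - sN1 p - sN2 p) - (sN1 p - sN2 p) ^ 2).

Definition fH (w : R) (p : st) : R :=
  qbar w p * (1 - sH p ^ 2) - Fbar p * sH p.
Definition fS1 (w : R) (p : st) : R :=
  sS1 p * ((2 - qbar w p) * sH p - Fbar p) + S3_1 p.
Definition fS2 (w : R) (p : st) : R :=
  sS2 p * ((2 - qbar w p) * sH p - Fbar p) + S3_2 p.
Definition fS3 (w : R) (p : st) : R :=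
  sS3 p * ((2 - qbar w p) * sH p - Fbar p) + S3_3 p.
Definition fN1 (w : R) (p : st) : R :=
  - sN1 p * (qbar w p * sH p + 2 * sS1 p + Fbar p).
Definition fN2 (w : R) (p : st) : R :=
  - sN2 p * (qbar w p * sH p + 2 * sS2 p + Fbar p).
Definition fN3 (w : R) (p : st) : R :=
  - sN3 p * (qbar w p * sH p + 2 * sS3 p + Fbar p).

Definition admissible (p : st) : Prop :=
  sS1 p + sS2 p + sS3 p = 0 /\
  sH p ^ 2 + / 6 * (sN1 p * sN2 p + sN1 p * sN3 p + sN2 p * sN3 p) = 1 /\
  0 <= Omega p.

Definition B_IX (p : st) : Prop :=
  admissible p /\ 0 < sN1 p /\ 0 < sN2 p /\ 0 < sN3 p /\ 0 < sH p.

Definition B_N1N2 (p : st) : Prop :=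
  admissible p /\ 0 < sN1 p /\ 0 < sN2 p /\ sN3 p = 0 /\ 0 < sH p.
Definition B_N2N3 (p : st) : Prop :=
  admissible p /\ 0 < sN2 p /\ 0 < sN3 p /\ sN1 p = 0 /\ 0 < sH p.
Definition B_N3N1 (p : st) : Prop :=
  admissible p /\ 0 < sN3 p /\ 0 < sN1 p /\ sN2 p = 0 /\ 0 < sH p.

Definition B_VII0 (p : st) : Prop := B_N1N2 p \/ B_N2N3 p \/ B_N3N1 p.

Definition dist2 (p q : st) : R :=
  (sH p - sH q) ^ 2 + (sS1 p - sS1 q) ^ 2 + (sS2 p - sS2 q) ^ 2 +
  (sS3 p - sS3 q) ^ 2 + (sN1 p - sN1 q) ^ 2 + (sN2 p - sN2 q) ^ 2 +
  (sN3 p - sN3 q) ^ 2.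

Definition in_closure (P : st -> Prop) (p : st) : Prop :=
  forall eps, 0 < eps -> exists q, P q /\ dist2 p q < eps.

Definition is_solution (w : R) (x : R -> st) : Prop :=
  forall t, 0 <= t ->
    derivable_pt_lim (fun s => sH (x s)) t (fH w (x t)) /\
    derivable_pt_lim (fun s => sS1 (x s)) t (fS1 w (x t)) /\
    derivable_pt_lim (fun s => sS2 (x s)) t (fS2 w (x t)) /\
    derivable_pt_lim (fun s => sS3 (x s)) t (fS3 w (x t)) /\
    derivable_pt_lim (fun s => sN1 (x s)) t (fN1 w (x t)) /\
    derivable_pt_lim (fun s => sN2 (x s)) t (fN2 w (x t)) /\
    derivable_pt_lim (fun s => sN3 (x s)) t (fN3 w (x t)).

Definition omega_limit (x : R -> st) (p : st) : Prop :=
  forall eps T, 0 < eps -> exists t, T <= t /\ dist2 (x t) p < eps.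

(* Main.v *)
Require Import Defs.
From Stdlib Require Import Reals Lra Psatz Classical.
From Coquelicot Require Import Coquelicot.
Open Scope R_scope.


Lemma dl_eq f t l l' : derivable_pt_lim f t l -> l = l' -> derivable_pt_lim f t l'.
Proof. intros H ->; exact H. Qed.
Lemma dl_plus f g t a b : derivable_pt_lim f t a -> derivable_pt_lim g t b ->
  derivable_pt_lim (fun u => f u + g u) t (a + b).
Proof. intros; apply (derivable_pt_lim_plus f g); auto. Qed.
Lemma dl_minus f g t a b : derivable_pt_lim f t a -> derivable_pt_lim g t b ->
  derivable_pt_lim (fun u => f u - g u) t (a - b).
Proof. intros; apply (derivable_pt_lim_minus f g); auto. Qed.
Lemma dl_mult f g t a b : derivable_pt_lim f t a -> derivable_pt_lim g t b ->
  derivable_pt_lim (fun u => f u * g u) t (a * g t + f t * b).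
Proof. intros; apply (derivable_pt_lim_mult f g); auto. Qed.
Lemma dl_opp f t a : derivable_pt_lim f t a -> derivable_pt_lim (fun u => - f u) t (- a).
Proof. intros; apply (derivable_pt_lim_opp f); auto. Qed.
Lemma dl_const c t : derivable_pt_lim (fun _ => c) t 0.
Proof. apply derivable_pt_lim_const. Qed.
Lemma dl_pow f t a n : derivable_pt_lim f t a ->
  derivable_pt_lim (fun u => f u ^ n) t (INR n * f t ^ (pred n) * a).
Proof.
  intros H. apply (dl_eq _ _ ((INR n * f t ^ (pred n)) * a)); [|ring].
  apply (derivable_pt_lim_comp f (fun y => y ^ n)); auto.
  apply derivable_pt_lim_pow.
Qed.
Lemma dl_div f g t a b : derivable_pt_lim f t a -> derivable_pt_lim g t b -> g t <> 0 ->
  derivable_pt_lim (fun u => f u / g u) t ((a * g t - b * f t) / (g t)²).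
Proof. intros; apply (derivable_pt_lim_div f g); auto. Qed.
Lemma dl_exp f t a : derivable_pt_lim f t a ->
  derivable_pt_lim (fun u => exp (f u)) t (exp (f t) * a).
Proof.
  intros H. apply (derivable_pt_lim_comp f exp); auto. apply derivable_pt_lim_exp.
Qed.

Ltac dtac := repeat first
  [ apply dl_plus | apply dl_minus | apply dl_mult | apply dl_opp | apply dl_pow
  | apply dl_const | eassumption ].

Lemma cp_plus f g t : continuity_pt f t -> continuity_pt g t -> continuity_pt (fun u => f u + g u) t.
Proof. intros; apply (continuity_pt_plus f g); auto. Qed.
Lemma cp_minus f g t : continuity_pt f t -> continuity_pt g t -> continuity_pt (fun u => f u - g u) t.
Proof. intros; apply (continuity_pt_minus f g); auto. Qed.
Lemma cp_mult f g t : continuity_pt f t -> continuity_pt g t -> continuity_pt (fun u => f u * g u) t.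
Proof. intros; apply (continuity_pt_mult f g); auto. Qed.
Lemma cp_opp f t : continuity_pt f t -> continuity_pt (fun u => - f u) t.
Proof. intros; apply (continuity_pt_opp f); auto. Qed.
Lemma cp_const c t : continuity_pt (fun _ => c) t.
Proof. apply continuity_pt_const. intros a b; reflexivity. Qed.
Lemma cp_pow f t n : continuity_pt f t -> continuity_pt (fun u => f u ^ n) t.
Proof.
  intros H. induction n as [|n IH]; simpl.
  - apply cp_const.
  - apply cp_mult; auto.
Qed.
Ltac ctac := repeat first
  [ apply cp_plus | apply cp_minus | apply cp_mult | apply cp_opp | apply cp_pow
  | apply cp_const | assumption ].

Lemma slope_lb f f' a b k : a <= b ->
  (forall c, a <= c <= b -> derivable_pt_lim f c (f' c)) ->
  (forall c, a <= c <= b -> k <= f' c) -> k * (b - a) <= f b - f a.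
Proof.
  intros Hab Hd Hk. destruct (Rle_lt_or_eq_dec _ _ Hab) as [Hlt|Heq].
  - destruct (MVT_cor2 f f' a b Hlt Hd) as [c [Hc Hc']].
    rewrite Hc. apply Rmult_le_compat_r; [lra|]. apply Hk; lra.
  - subst. lra.
Qed.

Lemma prim (g : R -> R) : (forall t, continuity_pt g t) ->
  forall t, derivable_pt_lim (fun u => RInt g 0 u) t (g t).
Proof.
  intros Hc t. apply is_derive_Reals.
  apply (is_derive_RInt g (fun u => RInt g 0 u) 0 t).
  - apply filter_forall. intros y. apply (RInt_correct (V:=R_CompleteNormedModule)). apply ex_RInt_continuous.
    intros z _. apply continuity_pt_filterlim. apply Hc.
  - apply continuity_pt_filterlim. apply Hc.
Qed.

Lemma cmp (f g d : R -> R) : (forall t, continuity_pt g t) ->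
  (forall t, 0 <= t -> derivable_pt_lim f t (d t)) ->
  (forall t, 0 <= t -> g t * f t <= d t) ->
  forall t, 0 <= t -> f 0 * exp (- RInt g 0 0) <= f t * exp (- RInt g 0 t).
Proof.
  intros Hc Hd Hle t Ht.
  set (G := fun u => RInt g 0 u).
  assert (HG := prim g Hc).
  assert (H := slope_lb (fun u => f u * exp (- G u))
     (fun u => d u * exp (- G u) + f u * (exp (- G u) * (- g u))) 0 t 0 Ht).
  simpl in H. cut (0 * (t - 0) <= f t * exp (- G t) - f 0 * exp (- G 0)).
  { unfold G; lra. }
  apply H.
  - intros c Hc'. apply (dl_mult f (fun u => exp (- G u))). apply Hd; lra. apply (dl_exp (fun u => - G u)). apply (dl_opp G). apply HG.
  - intros c Hc'. assert (Hp := exp_pos (- G c)). specialize (Hle c ltac:(lra)).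
    nra.
Qed.

Lemma cmp_pos f g d : (forall t, continuity_pt g t) ->
  (forall t, 0 <= t -> derivable_pt_lim f t (d t)) ->
  (forall t, 0 <= t -> g t * f t <= d t) -> 0 < f 0 -> forall t, 0 <= t -> 0 < f t.
Proof.
  intros H1 H2 H3 H0 t Ht. assert (H := cmp f g d H1 H2 H3 t Ht).
  assert (A := exp_pos (- RInt g 0 0)). assert (B := exp_pos (- RInt g 0 t)).
  nra.
Qed.
Lemma cmp_nonneg f g d : (forall t, continuity_pt g t) ->
  (forall t, 0 <= t -> derivable_pt_lim f t (d t)) ->
  (forall t, 0 <= t -> g t * f t <= d t) -> 0 <= f 0 -> forall t, 0 <= t -> 0 <= f t.
Proof.
  intros H1 H2 H3 H0 t Ht. assert (H := cmp f g d H1 H2 H3 t Ht).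
  assert (A := exp_pos (- RInt g 0 0)). assert (B := exp_pos (- RInt g 0 t)).
  nra.
Qed.
Lemma cmp_zero f g d : (forall t, continuity_pt g t) ->
  (forall t, 0 <= t -> derivable_pt_lim f t (d t)) ->
  (forall t, 0 <= t -> d t = g t * f t) -> f 0 = 0 -> forall t, 0 <= t -> f t = 0.
Proof.
  intros H1 H2 H3 H0 t Ht.
  assert (A := cmp_nonneg f g d H1 H2 ltac:(intros u Hu; rewrite H3 by lra; lra) ltac:(lra) t Ht).
  assert (B := cmp_nonneg (fun u => - f u) g (fun u => - d u) H1
     ltac:(intros u Hu; apply dl_opp; auto) ltac:(intros u Hu; cbv beta; rewrite H3 by lra; lra) ltac:(lra) t Ht).
  simpl in B. lra.
Qed.


Lemma abs_lt_sq a e : 0 < e -> a ^ 2 < e ^ 2 -> Rabs a < e.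
Proof. intros He H. unfold Rabs; destruct (Rcase_abs a); nra. Qed.
Lemma sq_lt_abs a e : Rabs a < e -> a ^ 2 < e ^ 2.
Proof. intros H. unfold Rabs in H; destruct (Rcase_abs a); nra. Qed.

Lemma freq_step (P : R -> R -> Prop) (v : R -> R) (B : R) :
 (forall e e' t, 0 < e <= e' -> P e t -> P e' t) ->
 (forall e T, 0 < e -> exists t, T <= t /\ P e t) ->
 (forall e t, 0 < e -> P e t -> Rabs (v t) <= B) ->
 exists b, forall e T, 0 < e -> exists t, T <= t /\ P e t /\ Rabs (v t - b) < e.
Proof.
  intros Hmono Hfreq Hbd.
  set (A := fun y => forall e T, 0 < e -> exists t, T <= t /\ P e t /\ y - e < v t).
  assert (HubA : forall y, A y -> y <= B).
  { intros y Hy. destruct (Rle_dec y B) as [|Hn]; [auto|].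
    destruct (Hy (y - B) 0 ltac:(lra)) as [t [_ [Hp Hv]]].
    assert (Hb := Hbd (y - B) t ltac:(lra) Hp). unfold Rabs in Hb; destruct (Rcase_abs (v t)); lra. }
  assert (HA0 : A (- B)).
  { intros e T He. destruct (Hfreq e T He) as [t [Ht Hp]]. exists t; split; auto; split; auto.
    assert (Hb := Hbd _ _ He Hp). unfold Rabs in Hb; destruct (Rcase_abs (v t)); lra. }
  destruct (completeness A) as [b [Hub Hlub]].
  { exists B. intros y Hy. apply HubA; auto. }
  { exists (- B); auto. }
  exists b. intros e T He.
  assert (Hy : exists y, A y /\ b - e / 2 < y).
  { apply NNPP. intros Hn. assert (b <= b - e/2); [|lra].
    apply Hlub. intros y Hy. destruct (Rle_dec y (b - e/2)) as [|Hn']; auto.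
    exfalso; apply Hn; exists y; split; auto; lra. }
  destruct Hy as [y [Hy Hyb]].
  apply NNPP. intros Hn.
  assert (HA : A (b + e / 2)).
  { intros e0 T0 He0.
    set (e1 := Rmin e0 (e/2)). assert (He1 : 0 < e1) by (unfold e1; apply Rmin_glb_lt; lra).
    assert (He1a : e1 <= e0) by apply Rmin_l. assert (He1b : e1 <= e/2) by apply Rmin_r.
    destruct (Hy e1 (Rmax T0 T) He1) as [t [Ht [Hp Hv]]].
    assert (HT0 := Rmax_l T0 T). assert (HT := Rmax_r T0 T).
    exists t. split; [lra|]. split. { apply (Hmono e1); auto; lra. }
    destruct (Rlt_dec (v t) (b + e)) as [Hl|Hl].
    - exfalso; apply Hn. exists t. split; [lra|]. split. { apply (Hmono e1); auto; lra. }
      unfold Rabs; destruct (Rcase_abs (v t - b)); lra.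
    - lra. }
  assert (b + e / 2 <= b) by (apply Hub; auto). lra.
Qed.

Lemma BW (x : R -> st) :
  (forall t, 0 <= t -> Rabs (sH (x t)) <= 4 /\ Rabs (sS1 (x t)) <= 4 /\ Rabs (sS2 (x t)) <= 4 /\
     Rabs (sS3 (x t)) <= 4 /\ Rabs (sN1 (x t)) <= 4 /\ Rabs (sN2 (x t)) <= 4 /\ Rabs (sN3 (x t)) <= 4) ->
  exists p, omega_limit x p.
Proof.
  intros Hb.
  set (P0 := fun (e t : R) => 0 <= t).
  destruct (freq_step P0 (fun t => sH (x t)) 4) as [b1 Hb1].
  { unfold P0; auto. }
  { intros e T He. exists (Rmax T 0). split. apply Rmax_l. apply Rmax_r. }
  { intros e t He Hp. apply Hb; auto. }
  set (P1 := fun e t => P0 e t /\ Rabs (sH (x t) - b1) < e).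
  destruct (freq_step P1 (fun t => sS1 (x t)) 4) as [b2 Hb2].
  { unfold P1, P0; intros; split; [tauto|lra]. }
  { intros e T He. destruct (Hb1 e T He) as [t Ht]. exists t. unfold P1; tauto. }
  { intros e t He Hp. apply Hb; apply Hp. }
  set (P2 := fun e t => P1 e t /\ Rabs (sS1 (x t) - b2) < e).
  destruct (freq_step P2 (fun t => sS2 (x t)) 4) as [b3 Hb3].
  { unfold P2, P1, P0; intros; split; [split; [tauto|lra]|lra]. }
  { intros e T He. destruct (Hb2 e T He) as [t Ht]. exists t. unfold P2; tauto. }
  { intros e t He Hp. apply Hb; apply Hp. }
  set (P3 := fun e t => P2 e t /\ Rabs (sS2 (x t) - b3) < e).
  destruct (freq_step P3 (fun t => sS3 (x t)) 4) as [b4 Hb4].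
  { unfold P3, P2, P1, P0; intros; split; [split; [split; [tauto|lra]|lra]|lra]. }
  { intros e T He. destruct (Hb3 e T He) as [t Ht]. exists t. unfold P3; tauto. }
  { intros e t He Hp. apply Hb; apply Hp. }
  set (P4 := fun e t => P3 e t /\ Rabs (sS3 (x t) - b4) < e).
  destruct (freq_step P4 (fun t => sN1 (x t)) 4) as [b5 Hb5].
  { unfold P4, P3, P2, P1, P0; intros; split; [split; [split; [split; [tauto|lra]|lra]|lra]|lra]. }
  { intros e T He. destruct (Hb4 e T He) as [t Ht]. exists t. unfold P4; tauto. }
  { intros e t He Hp. apply Hb; apply Hp. }
  set (P5 := fun e t => P4 e t /\ Rabs (sN1 (x t) - b5) < e).
  destruct (freq_step P5 (fun t => sN2 (x t)) 4) as [b6 Hb6].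
  { unfold P5, P4, P3, P2, P1, P0; intros; split; [split; [split; [split; [split; [tauto|lra]|lra]|lra]|lra]|lra]. }
  { intros e T He. destruct (Hb5 e T He) as [t Ht]. exists t. unfold P5; tauto. }
  { intros e t He Hp. apply Hb; apply Hp. }
  set (P6 := fun e t => P5 e t /\ Rabs (sN2 (x t) - b6) < e).
  destruct (freq_step P6 (fun t => sN3 (x t)) 4) as [b7 Hb7].
  { unfold P6, P5, P4, P3, P2, P1, P0; intros; split; [split; [split; [split; [split; [split; [tauto|lra]|lra]|lra]|lra]|lra]|lra]. }
  { intros e T He. destruct (Hb6 e T He) as [t Ht]. exists t. unfold P6; tauto. }
  { intros e t He Hp. apply Hb; apply Hp. }
  exists (mkst b1 b2 b3 b4 b5 b6 b7).
  intros eps T Heps.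
  set (e := Rmin 1 (eps / 8)).
  assert (He : 0 < e) by (unfold e; apply Rmin_glb_lt; lra).
  assert (He1 : e <= 1) by apply Rmin_l. assert (He2 : e <= eps / 8) by apply Rmin_r.
  destruct (Hb7 e T He) as [t [Ht Hp]].
  unfold P6, P5, P4, P3, P2, P1, P0 in Hp.
  destruct Hp as [[[[[[[_ h1] h2] h3] h4] h5] h6] h7].
  exists t; split; auto. unfold dist2; simpl.
  apply sq_lt_abs in h1, h2, h3, h4, h5, h6, h7. nra.
Qed.


Definition scont (phi : st -> R) (p : st) : Prop :=
  forall e, 0 < e -> exists d, 0 < d /\ forall q, dist2 p q < d -> Rabs (phi q - phi p) < e.

Lemma dist2_nonneg p q : 0 <= dist2 p q.
Proof. unfold dist2. repeat apply Rplus_le_le_0_compat; apply pow2_ge_0. Qed.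

Lemma sc_const c p : scont (fun _ => c) p.
Proof. intros e He. exists 1. split; [lra|]. intros q _. rewrite Rminus_diag, Rabs_R0. lra. Qed.


Ltac dterms p q := unfold dist2;
  assert (h1 := pow2_ge_0 (sH p - sH q)); assert (h2 := pow2_ge_0 (sS1 p - sS1 q));
  assert (h3 := pow2_ge_0 (sS2 p - sS2 q)); assert (h4 := pow2_ge_0 (sS3 p - sS3 q));
  assert (h5 := pow2_ge_0 (sN1 p - sN1 q)); assert (h6 := pow2_ge_0 (sN2 p - sN2 q));
  assert (h7 := pow2_ge_0 (sN3 p - sN3 q)); lra.
Lemma dH p q : (sH q - sH p) ^ 2 <= dist2 p q.
Proof. replace ((sH q - sH p) ^ 2) with ((sH p - sH q) ^ 2) by ring. dterms p q. Qed.
Lemma dS1 p q : (sS1 q - sS1 p) ^ 2 <= dist2 p q.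
Proof. replace ((sS1 q - sS1 p) ^ 2) with ((sS1 p - sS1 q) ^ 2) by ring. dterms p q. Qed.
Lemma dS2 p q : (sS2 q - sS2 p) ^ 2 <= dist2 p q.
Proof. replace ((sS2 q - sS2 p) ^ 2) with ((sS2 p - sS2 q) ^ 2) by ring. dterms p q. Qed.
Lemma dS3 p q : (sS3 q - sS3 p) ^ 2 <= dist2 p q.
Proof. replace ((sS3 q - sS3 p) ^ 2) with ((sS3 p - sS3 q) ^ 2) by ring. dterms p q. Qed.
Lemma dN1 p q : (sN1 q - sN1 p) ^ 2 <= dist2 p q.
Proof. replace ((sN1 q - sN1 p) ^ 2) with ((sN1 p - sN1 q) ^ 2) by ring. dterms p q. Qed.
Lemma dN2 p q : (sN2 q - sN2 p) ^ 2 <= dist2 p q.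
Proof. replace ((sN2 q - sN2 p) ^ 2) with ((sN2 p - sN2 q) ^ 2) by ring. dterms p q. Qed.
Lemma dN3 p q : (sN3 q - sN3 p) ^ 2 <= dist2 p q.
Proof. replace ((sN3 q - sN3 p) ^ 2) with ((sN3 p - sN3 q) ^ 2) by ring. dterms p q. Qed.

Ltac sc_comp L := intros e He; exists (e ^ 2); split; [nra|]; intros q Hq;
  apply abs_lt_sq; [lra|]; eapply Rle_lt_trans; [apply L|exact Hq].
Lemma sc_H p : scont sH p. Proof. sc_comp dH. Qed.
Lemma sc_S1 p : scont sS1 p. Proof. sc_comp dS1. Qed.
Lemma sc_S2 p : scont sS2 p. Proof. sc_comp dS2. Qed.
Lemma sc_S3 p : scont sS3 p. Proof. sc_comp dS3. Qed.
Lemma sc_N1 p : scont sN1 p. Proof. sc_comp dN1. Qed.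
Lemma sc_N2 p : scont sN2 p. Proof. sc_comp dN2. Qed.
Lemma sc_N3 p : scont sN3 p. Proof. sc_comp dN3. Qed.

Lemma sc_plus f g p : scont f p -> scont g p -> scont (fun q => f q + g q) p.
Proof.
  intros Hf Hg e He. destruct (Hf (e/2) ltac:(lra)) as [d1 [Hd1 H1]].
  destruct (Hg (e/2) ltac:(lra)) as [d2 [Hd2 H2]].
  exists (Rmin d1 d2). split. apply Rmin_glb_lt; auto.
  intros q Hq. assert (A := H1 q (Rlt_le_trans _ _ _ Hq (Rmin_l _ _))).
  assert (B := H2 q (Rlt_le_trans _ _ _ Hq (Rmin_r _ _))).
  replace (f q + g q - (f p + g p)) with ((f q - f p) + (g q - g p)) by ring.
  eapply Rle_lt_trans. apply Rabs_triang. lra.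
Qed.
Lemma sc_opp f p : scont f p -> scont (fun q => - f q) p.
Proof.
  intros Hf e He. destruct (Hf e He) as [d [Hd H]]. exists d; split; auto.
  intros q Hq. replace (- f q - - f p) with (- (f q - f p)) by ring. rewrite Rabs_Ropp; auto.
Qed.
Lemma sc_minus f g p : scont f p -> scont g p -> scont (fun q => f q - g q) p.
Proof. intros. apply (sc_plus f (fun q => - g q)); auto. apply sc_opp; auto. Qed.
Lemma sc_mult f g p : scont f p -> scont g p -> scont (fun q => f q * g q) p.
Proof.
  intros Hf Hg e He.
  set (a := Rabs (f p)). set (b := Rabs (g p)).
  assert (Ha : 0 <= a) by apply Rabs_pos. assert (Hb : 0 <= b) by apply Rabs_pos.
  set (e1 := Rmin 1 (e / (3 * (b + 1)))). set (e2 := Rmin 1 (e / (3 * (a + 1)))).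
  assert (He1 : 0 < e1). { unfold e1; apply Rmin_glb_lt; [lra|]. apply Rdiv_lt_0_compat; lra. }
  assert (He2 : 0 < e2). { unfold e2; apply Rmin_glb_lt; [lra|]. apply Rdiv_lt_0_compat; lra. }
  destruct (Hf e1 He1) as [d1 [Hd1 H1]]. destruct (Hg e2 He2) as [d2 [Hd2 H2]].
  exists (Rmin d1 d2). split. apply Rmin_glb_lt; auto.
  intros q Hq. assert (A := H1 q (Rlt_le_trans _ _ _ Hq (Rmin_l _ _))).
  assert (B := H2 q (Rlt_le_trans _ _ _ Hq (Rmin_r _ _))).
  replace (f q * g q - f p * g p) with ((f q - f p) * (g q - g p) + f p * (g q - g p) + g p * (f q - f p)) by ring.
  set (u := f q - f p) in *. set (v := g q - g p) in *.
  assert (Hu : Rabs u < 1) by (eapply Rlt_le_trans; [exact A|apply Rmin_l]).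
  assert (Hu2 : Rabs u * (b + 1) <= e / 3).
  { assert (Rabs u <= e / (3 * (b+1))) by (left; eapply Rlt_le_trans; [exact A|apply Rmin_r]).
    apply (Rmult_le_compat_r (b+1)) in H; [|lra]. replace (e / (3 * (b + 1)) * (b + 1)) with (e/3) in H by (field; lra). lra. }
  assert (Hv2 : Rabs v * (a + 1) <= e / 3).
  { assert (Rabs v <= e / (3 * (a+1))) by (left; eapply Rlt_le_trans; [exact B|apply Rmin_r]).
    apply (Rmult_le_compat_r (a+1)) in H; [|lra]. replace (e / (3 * (a + 1)) * (a + 1)) with (e/3) in H by (field; lra). lra. }
  assert (Hv0 : 0 <= Rabs v) by apply Rabs_pos. assert (Hu0 : 0 <= Rabs u) by apply Rabs_pos.
  eapply Rle_lt_trans. apply Rabs_triang. eapply Rle_lt_trans. apply Rplus_le_compat_r. apply Rabs_triang.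
  rewrite !Rabs_mult. fold a b. nra.
Qed.
Lemma sc_pow f p n : scont f p -> scont (fun q => f q ^ n) p.
Proof.
  intros H. induction n as [|n IH]; simpl. apply sc_const. apply (sc_mult f (fun q => f q ^ n)); auto.
Qed.

Ltac sctac := repeat first
  [ apply sc_plus | apply sc_minus | apply sc_mult | apply sc_opp | apply sc_pow
  | apply sc_const | apply sc_H | apply sc_S1 | apply sc_S2 | apply sc_S3 | apply sc_N1
  | apply sc_N2 | apply sc_N3 ].

Lemma sc_test w p : scont (fun q => fS1 w q) p.
Proof. unfold fS1, qbar, Sig2, Omega, Fbar, S3_1. sctac. Qed.


Lemma cp_rmax t : continuity_pt (fun u => Rmax u 0) t.
Proof.
  intros eps Heps. exists eps. split; auto. intros y [_ Hy]. simpl in *. unfold R_dist in *.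
  unfold Rmax; destruct (Rle_dec y 0); destruct (Rle_dec t 0); unfold Rabs in *;
  repeat destruct Rcase_abs; lra.
Qed.

Lemma cont_ext (f : R -> R) (d : R -> R) : (forall t, 0 <= t -> derivable_pt_lim f t (d t)) ->
  forall t, continuity_pt (fun u => f (Rmax u 0)) t.
Proof.
  intros Hd t. apply (continuity_pt_comp (fun u => Rmax u 0) f). apply cp_rmax.
  apply derivable_continuous_pt. exists (d (Rmax t 0)). apply Hd. apply Rmax_r.
Qed.

Lemma sol_cont w x (hsol : is_solution w x) : forall t,
  continuity_pt (fun u => sH (x (Rmax u 0))) t /\ continuity_pt (fun u => sS1 (x (Rmax u 0))) t /\
  continuity_pt (fun u => sS2 (x (Rmax u 0))) t /\ continuity_pt (fun u => sS3 (x (Rmax u 0))) t /\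
  continuity_pt (fun u => sN1 (x (Rmax u 0))) t /\ continuity_pt (fun u => sN2 (x (Rmax u 0))) t /\
  continuity_pt (fun u => sN3 (x (Rmax u 0))) t.
Proof.
  intros t.
  split. apply (cont_ext (fun s => sH (x s)) (fun s => fH w (x s))); intros u Hu; apply (hsol u Hu).
  split. apply (cont_ext (fun s => sS1 (x s)) (fun s => fS1 w (x s))); intros u Hu; apply (hsol u Hu).
  split. apply (cont_ext (fun s => sS2 (x s)) (fun s => fS2 w (x s))); intros u Hu; apply (hsol u Hu).
  split. apply (cont_ext (fun s => sS3 (x s)) (fun s => fS3 w (x s))); intros u Hu; apply (hsol u Hu).
  split. apply (cont_ext (fun s => sN1 (x s)) (fun s => fN1 w (x s))); intros u Hu; apply (hsol u Hu).
  split. apply (cont_ext (fun s => sN2 (x s)) (fun s => fN2 w (x s))); intros u Hu; apply (hsol u Hu).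
  apply (cont_ext (fun s => sN3 (x s)) (fun s => fN3 w (x s))); intros u Hu; apply (hsol u Hu).
Qed.

Ltac getsol hsol t Ht := destruct (hsol t Ht) as (dH & d1 & d2 & d3 & d4 & d5 & d6).
Ltac getcont w x hsol t := destruct (sol_cont w x hsol t) as (cH & c1 & c2 & c3 & c4 & c5 & c6).

Lemma inv_sum w x (hsol : is_solution w x) (h0 : B_IX (x 0)) :
  forall t, 0 <= t -> sS1 (x t) + sS2 (x t) + sS3 (x t) = 0.
Proof.
  set (xt := fun u => x (Rmax u 0)).
  set (g := fun t => (2 - qbar w (xt t)) * sH (xt t) - Fbar (xt t)).
  apply (cmp_zero (fun t => sS1 (x t) + sS2 (x t) + sS3 (x t)) g
     (fun t => g t * (sS1 (x t) + sS2 (x t) + sS3 (x t)))).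
  - intros t. getcont w x hsol t. unfold g, xt, qbar, Sig2, Omega, Fbar. ctac.
  - intros t Ht. getsol hsol t Ht. eapply dl_eq. dtac.
    unfold g, xt. rewrite Rmax_left by lra.
    unfold fS1, fS2, fS3, S3_1, S3_2, S3_3. ring.
  - reflexivity.
  - destruct h0 as [[hs _] _]. exact hs.
Qed.

Lemma inv_gauss w x (hsol : is_solution w x) (h0 : B_IX (x 0)) :
  forall t, 0 <= t -> sH (x t) ^ 2 + / 6 * (sN1 (x t) * sN2 (x t) + sN1 (x t) * sN3 (x t) + sN2 (x t) * sN3 (x t)) - 1 = 0.
Proof.
  set (xt := fun u => x (Rmax u 0)).
  set (g := fun t => -2 * (qbar w (xt t) * sH (xt t) + Fbar (xt t))).
  apply (cmp_zero _ g
     (fun t => g t * (sH (x t) ^ 2 + / 6 * (sN1 (x t) * sN2 (x t) + sN1 (x t) * sN3 (x t) + sN2 (x t) * sN3 (x t)) - 1))).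
  - intros t. getcont w x hsol t. unfold g, xt, qbar, Sig2, Omega, Fbar. ctac.
  - intros t Ht. getsol hsol t Ht. eapply dl_eq. dtac.
    unfold g, xt. rewrite Rmax_left by lra.
    assert (hs := inv_sum w x hsol h0 t Ht).
    unfold fH, fN1, fN2, fN3, qbar, Sig2, Omega, Fbar. simpl.
    replace (sS3 (x t)) with (- (sS1 (x t) + sS2 (x t))) by lra. ring.
  - reflexivity.
  - destruct h0 as [[_ [hg _]] _]. lra.
Qed.

Ltac npos_tac w x hsol h0 S N dN hN :=
  let xt := fresh "xt" in let g := fresh "g" in
  set (xt := fun u => x (Rmax u 0));
  set (g := fun t => - (qbar w (xt t) * sH (xt t) + 2 * S (xt t) + Fbar (xt t)));
  apply (cmp_pos (fun t => N (x t)) g (fun t => g t * N (x t)));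
  [ intros t; getcont w x hsol t; unfold g, xt, qbar, Sig2, Omega, Fbar; ctac
  | intros t Ht; getsol hsol t Ht; eapply dl_eq; [exact dN|];
    unfold g, xt; rewrite Rmax_left by lra; unfold fN1, fN2, fN3; ring
  | intros; lra
  | destruct h0 as [_ hN]; lra ].

Lemma inv_N1 w x (hsol : is_solution w x) (h0 : B_IX (x 0)) : forall t, 0 <= t -> 0 < sN1 (x t).
Proof. npos_tac w x hsol h0 sS1 sN1 d4 hN. Qed.
Lemma inv_N2 w x (hsol : is_solution w x) (h0 : B_IX (x 0)) : forall t, 0 <= t -> 0 < sN2 (x t).
Proof. npos_tac w x hsol h0 sS2 sN2 d5 hN. Qed.
Lemma inv_N3 w x (hsol : is_solution w x) (h0 : B_IX (x 0)) : forall t, 0 <= t -> 0 < sN3 (x t).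
Proof. npos_tac w x hsol h0 sS3 sN3 d6 hN. Qed.

Lemma inv_Omega w x (hsol : is_solution w x) (h0 : B_IX (x 0)) :
  forall t, 0 <= t -> 0 <= Omega (x t).
Proof.
  set (xt := fun u => x (Rmax u 0)).
  set (g := fun t => (1 + 3 * w) * sH (xt t) - 2 * (qbar w (xt t) * sH (xt t) + Fbar (xt t))).
  apply (cmp_nonneg (fun t => Omega (x t)) g (fun t => g t * Omega (x t))).
  - intros t. getcont w x hsol t. unfold g, xt, qbar, Sig2, Omega, Fbar. ctac.
  - intros t Ht. getsol hsol t Ht. unfold Omega at 1, Sig2 at 1. eapply dl_eq. dtac.
    unfold g, xt. rewrite Rmax_left by lra.
    assert (hs := inv_sum w x hsol h0 t Ht).
    unfold fS1, fS2, fS3, fN1, fN2, fN3, S3_1, S3_2, S3_3, qbar, Omega, Sig2, Fbar. simpl.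
    replace (sS3 (x t)) with (- (sS1 (x t) + sS2 (x t))) by lra. field.
  - intros; lra.
  - destruct h0 as [[_ [_ hO]] _]. lra.
Qed.

Lemma Sig2_nonneg p : 0 <= Sig2 p.
Proof. unfold Sig2. assert (h1 := pow2_ge_0 (sS1 p)). assert (h2 := pow2_ge_0 (sS2 p)).
  assert (h3 := pow2_ge_0 (sS3 p)). lra. Qed.

Lemma q_nonneg w p : -1/3 < w -> 0 <= Omega p -> 0 <= qbar w p.
Proof. intros hw hO. unfold qbar. assert (h := Sig2_nonneg p). nra. Qed.

Lemma inv_H w x (hw : -1/3 < w < 1) (hsol : is_solution w x) (h0 : B_IX (x 0)) :
  forall t, 0 <= t -> 0 < sH (x t).
Proof.
  set (xt := fun u => x (Rmax u 0)).
  set (g := fun t => - Fbar (xt t)).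
  apply (cmp_pos (fun t => sH (x t)) g (fun t => fH w (x t))).
  - intros t. getcont w x hsol t. unfold g, xt, Fbar. ctac.
  - intros t Ht. getsol hsol t Ht. exact dH.
  - intros t Ht. unfold g, xt. rewrite Rmax_left by lra. unfold fH.
    assert (hq := q_nonneg w (x t) ltac:(lra) (inv_Omega w x hsol h0 t Ht)).
    assert (hg := inv_gauss w x hsol h0 t Ht).
    assert (n1 := inv_N1 w x hsol h0 t Ht). assert (n2 := inv_N2 w x hsol h0 t Ht).
    assert (n3 := inv_N3 w x hsol h0 t Ht).
    assert (0 <= 1 - sH (x t) ^ 2) by nra. nra.
  - destruct h0 as [_ [_ [_ [_ hH]]]]. lra.
Qed.

Lemma inv_BIX w x (hw : -1/3 < w < 1) (hsol : is_solution w x) (h0 : B_IX (x 0)) :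
  forall t, 0 <= t -> B_IX (x t).
Proof.
  intros t Ht. split; [split; [|split]|].
  - apply (inv_sum w x hsol h0 t Ht).
  - assert (h := inv_gauss w x hsol h0 t Ht). lra.
  - apply (inv_Omega w x hsol h0 t Ht).
  - split. apply (inv_N1 w x hsol h0 t Ht). split. apply (inv_N2 w x hsol h0 t Ht).
    split. apply (inv_N3 w x hsol h0 t Ht). apply (inv_H w x hw hsol h0 t Ht).
Qed.


Lemma ab_mult a b A B : Rabs a <= A -> Rabs b <= B -> Rabs (a * b) <= A * B.
Proof. intros. rewrite Rabs_mult. apply Rmult_le_compat; auto; apply Rabs_pos. Qed.
Lemma ab_plus a b A B : Rabs a <= A -> Rabs b <= B -> Rabs (a + b) <= A + B.
Proof. intros. eapply Rle_trans. apply Rabs_triang. lra. Qed.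
Lemma ab_minus a b A B : Rabs a <= A -> Rabs b <= B -> Rabs (a - b) <= A + B.
Proof. intros. unfold Rminus. apply ab_plus; auto. rewrite Rabs_Ropp; auto. Qed.
Lemma ab_opp a A : Rabs a <= A -> Rabs (- a) <= A.
Proof. intros. rewrite Rabs_Ropp; auto. Qed.
Lemma ab_of a A : -A <= a <= A -> Rabs a <= A.
Proof. intros. unfold Rabs; destruct Rcase_abs; lra. Qed.
Lemma ab_sq a A : 0 <= A -> a ^ 2 <= A ^ 2 -> Rabs a <= A.
Proof. intros. apply ab_of. nra. Qed.
Lemma ab_const c : Rabs c <= Rabs c.
Proof. lra. Qed.

Record bnds (w : R) (p : st) : Prop := mkb {
  bH : 0 <= sH p <= 1; bS1 : Rabs (sS1 p) <= 3; bS2 : Rabs (sS2 p) <= 3; bS3 : Rabs (sS3 p) <= 3;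
  bN1 : 0 <= sN1 p <= 4; bN2 : 0 <= sN2 p <= 4; bN3 : 0 <= sN3 p <= 4;
  bq : 0 <= qbar w p <= 4 }.

Lemma get_bnds w p : -1/3 < w < 1 -> admissible p -> 0 <= sN1 p -> 0 <= sN2 p -> 0 <= sN3 p ->
  0 <= sH p -> bnds w p.
Proof.
  intros hw [hs [hg hO]] n1 n2 n3 hH.
  assert (hS := Sig2_nonneg p). unfold Omega, Sig2 in *.
  assert (a1 := pow2_ge_0 (sS1 p)). assert (a2 := pow2_ge_0 (sS2 p)). assert (a3 := pow2_ge_0 (sS3 p)).
  assert (b1 := pow2_ge_0 (sN1 p)). assert (b2 := pow2_ge_0 (sN2 p)). assert (b3 := pow2_ge_0 (sN3 p)).
  constructor.
  - split; auto. nra.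
  - apply ab_sq; lra.
  - apply ab_sq; lra.
  - apply ab_sq; lra.
  - split; auto. nra.
  - split; auto. nra.
  - split; auto. nra.
  - unfold qbar, Omega, Sig2. split; nra.
Qed.

Lemma F_bnd w p : bnds w p -> Rabs (Fbar p) <= 24.
Proof.
  intros [hH h1 h2 h3 n1 n2 n3 hq]. unfold Fbar.
  assert (m2 : Rabs (sN2 p) <= 4) by (apply ab_of; lra).
  assert (m3 : Rabs (sN3 p) <= 4) by (apply ab_of; lra).
  assert (m1' : Rabs (sN1 p) <= 4) by (apply ab_of; lra).
  assert (Rabs (sN1 p * sN2 p * sS3 p + sN1 p * sS2 p * sN3 p + sS1 p * sN2 p * sN3 p) <= 4*4*3 + 4*3*4 + 3*4*4).
  { repeat apply ab_plus; repeat apply ab_mult; auto. }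
  rewrite Rabs_mult. rewrite (Rabs_right (/6)) by lra. lra.
Qed.

Lemma S_bnd a b c : 0 <= a <= 4 -> 0 <= b <= 4 -> 0 <= c <= 4 ->
  Rabs (/ 3 * (a * (2 * a - b - c) - (b - c) ^ 2)) <= 16.
Proof. intros. apply ab_of. split; nra. Qed.

Lemma vel w p : bnds w p ->
  Rabs (fH w p) <= 200 /\ Rabs (fS1 w p) <= 200 /\ Rabs (fS2 w p) <= 200 /\ Rabs (fS3 w p) <= 200 /\
  Rabs (fN1 w p) <= 200 /\ Rabs (fN2 w p) <= 200 /\ Rabs (fN3 w p) <= 200.
Proof.
  intros hb. assert (hF := F_bnd w p hb). destruct hb as [hH h1 h2 h3 n1 n2 n3 hq].
  assert (mH : Rabs (sH p) <= 1) by (apply ab_of; lra).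
  assert (m1 : Rabs (sN1 p) <= 4) by (apply ab_of; lra).
  assert (m2 : Rabs (sN2 p) <= 4) by (apply ab_of; lra).
  assert (m3 : Rabs (sN3 p) <= 4) by (apply ab_of; lra).
  assert (mq : Rabs (qbar w p) <= 4) by (apply ab_of; lra).
  assert (mq2 : Rabs (2 - qbar w p) <= 2) by (apply ab_of; lra).
  assert (mH2 : Rabs (1 - sH p ^ 2) <= 1) by (apply ab_of; nra).
  assert (A : Rabs ((2 - qbar w p) * sH p - Fbar p) <= 2 * 1 + 24) by (apply ab_minus; auto; apply ab_mult; auto).
  assert (s1 := S_bnd _ _ _ n1 n2 n3). assert (s2 := S_bnd _ _ _ n2 n3 n1). assert (s3 := S_bnd _ _ _ n3 n1 n2).
  assert (two : Rabs 2 <= 2) by (apply ab_of; lra).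
  unfold fH, fS1, fS2, fS3, fN1, fN2, fN3, S3_1, S3_2, S3_3.
  repeat split.
  - eapply Rle_trans. apply ab_minus; apply ab_mult; eauto. lra.
  - eapply Rle_trans. apply ab_plus; [apply ab_mult|]; eauto. lra.
  - eapply Rle_trans. apply ab_plus; [apply ab_mult|]; eauto. lra.
  - eapply Rle_trans. apply ab_plus; [apply ab_mult|]; eauto. lra.
  - eapply Rle_trans. apply ab_mult; [apply ab_opp; eauto|]. apply ab_plus; [apply ab_plus|]; eauto. apply ab_mult; eauto. apply ab_mult; eauto. lra.
  - eapply Rle_trans. apply ab_mult; [apply ab_opp; eauto|]. apply ab_plus; [apply ab_plus|]; eauto. apply ab_mult; eauto. apply ab_mult; eauto. lra.
  - eapply Rle_trans. apply ab_mult; [apply ab_opp; eauto|]. apply ab_plus; [apply ab_plus|]; eauto. apply ab_mult; eauto. apply ab_mult; eauto. lra.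
Qed.

Lemma comp_move (f f' : R -> R) K a t : (forall c, 0 <= c -> derivable_pt_lim f c (f' c)) ->
  (forall c, 0 <= c -> Rabs (f' c) <= K) -> 0 <= a <= t -> (f t - f a) ^ 2 <= (K * (t - a)) ^ 2.
Proof.
  intros Hd Hb Ht.
  assert (A := slope_lb f f' a t (- K) ltac:(lra) ltac:(intros; apply Hd; lra)
    ltac:(intros c Hc; specialize (Hb c ltac:(lra)); unfold Rabs in Hb; destruct Rcase_abs; lra)).
  assert (B := slope_lb (fun u => - f u) (fun u => - f' u) a t (- K) ltac:(lra)
    ltac:(intros; apply dl_opp; apply Hd; lra)
    ltac:(intros c Hc; specialize (Hb c ltac:(lra)); unfold Rabs in Hb; destruct Rcase_abs; lra)).
  simpl in B. assert (0 <= K). { specialize (Hb a ltac:(lra)). assert (h := Rabs_pos (f' a)). lra. }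
  nra.
Qed.

Lemma traj_bnds w x (hw : -1/3 < w < 1) (hsol : is_solution w x) (h0 : B_IX (x 0)) :
  forall t, 0 <= t -> bnds w (x t).
Proof.
  intros t Ht. destruct (inv_BIX w x hw hsol h0 t Ht) as [ha [n1 [n2 [n3 hH]]]].
  apply get_bnds; auto; lra.
Qed.

Lemma motion w x (hw : -1/3 < w < 1) (hsol : is_solution w x) (h0 : B_IX (x 0)) :
  forall a t, 0 <= a <= t -> dist2 (x t) (x a) <= 7 * (200 * (t - a)) ^ 2.
Proof.
  intros a t Hat. unfold dist2.
  assert (e1 := comp_move (fun u => sH (x u)) (fun u => fH w (x u)) 200 a t
     ltac:(intros c Hc; apply (hsol c Hc)) ltac:(intros c Hc; destruct (vel w (x c) (traj_bnds w x hw hsol h0 c Hc)) as (?&?&?&?&?&?&?); assumption) Hat).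
  assert (e2 := comp_move (fun u => sS1 (x u)) (fun u => fS1 w (x u)) 200 a t
     ltac:(intros c Hc; apply (hsol c Hc)) ltac:(intros c Hc; destruct (vel w (x c) (traj_bnds w x hw hsol h0 c Hc)) as (?&?&?&?&?&?&?); assumption) Hat).
  assert (e3 := comp_move (fun u => sS2 (x u)) (fun u => fS2 w (x u)) 200 a t
     ltac:(intros c Hc; apply (hsol c Hc)) ltac:(intros c Hc; destruct (vel w (x c) (traj_bnds w x hw hsol h0 c Hc)) as (?&?&?&?&?&?&?); assumption) Hat).
  assert (e4 := comp_move (fun u => sS3 (x u)) (fun u => fS3 w (x u)) 200 a t
     ltac:(intros c Hc; apply (hsol c Hc)) ltac:(intros c Hc; destruct (vel w (x c) (traj_bnds w x hw hsol h0 c Hc)) as (?&?&?&?&?&?&?); assumption) Hat).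
  assert (e5 := comp_move (fun u => sN1 (x u)) (fun u => fN1 w (x u)) 200 a t
     ltac:(intros c Hc; apply (hsol c Hc)) ltac:(intros c Hc; destruct (vel w (x c) (traj_bnds w x hw hsol h0 c Hc)) as (?&?&?&?&?&?&?); assumption) Hat).
  assert (e6 := comp_move (fun u => sN2 (x u)) (fun u => fN2 w (x u)) 200 a t
     ltac:(intros c Hc; apply (hsol c Hc)) ltac:(intros c Hc; destruct (vel w (x c) (traj_bnds w x hw hsol h0 c Hc)) as (?&?&?&?&?&?&?); assumption) Hat).
  assert (e7 := comp_move (fun u => sN3 (x u)) (fun u => fN3 w (x u)) 200 a t
     ltac:(intros c Hc; apply (hsol c Hc)) ltac:(intros c Hc; destruct (vel w (x c) (traj_bnds w x hw hsol h0 c Hc)) as (?&?&?&?&?&?&?); assumption) Hat).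
  simpl in *. lra.
Qed.

Lemma dist2_sym p q : dist2 p q = dist2 q p.
Proof. unfold dist2. ring. Qed.

Lemma dist2_tri p q r : dist2 p r <= 2 * dist2 p q + 2 * dist2 q r.
Proof.
  unfold dist2.
  assert (forall a b c : R, (a - c) ^ 2 <= 2 * (a - b) ^ 2 + 2 * (b - c) ^ 2).
  { intros a b c. assert (0 <= (a - 2*b + c)^2) by apply pow2_ge_0. nra. }
  assert (h1 := H (sH p) (sH q) (sH r)). assert (h2 := H (sS1 p) (sS1 q) (sS1 r)).
  assert (h3 := H (sS2 p) (sS2 q) (sS2 r)). assert (h4 := H (sS3 p) (sS3 q) (sS3 r)).
  assert (h5 := H (sN1 p) (sN1 q) (sN1 r)). assert (h6 := H (sN2 p) (sN2 q) (sN2 r)).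
  assert (h7 := H (sN3 p) (sN3 q) (sN3 r)). lra.
Qed.


Lemma closed_ge (x : R -> st) phi p : scont phi p -> (forall t, 0 <= t -> 0 <= phi (x t)) ->
  omega_limit x p -> 0 <= phi p.
Proof.
  intros Hc Hx Ho. destruct (Rle_dec 0 (phi p)) as [|Hn]; auto. exfalso.
  destruct (Hc (- phi p) ltac:(lra)) as [d [Hd H]].
  destruct (Ho d 0 Hd) as [t [Ht Htd]]. rewrite dist2_sym in Htd.
  specialize (H _ Htd). specialize (Hx t Ht). unfold Rabs in H; destruct Rcase_abs; lra.
Qed.

Lemma closed_eq (x : R -> st) phi p : scont phi p -> (forall t, 0 <= t -> phi (x t) = 0) ->
  omega_limit x p -> phi p = 0.
Proof.
  intros Hc Hx Ho.
  assert (A := closed_ge x phi p Hc ltac:(intros t Ht; cbv beta; rewrite (Hx t Ht); lra) Ho).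
  assert (B := closed_ge x (fun q => - phi q) p ltac:(apply sc_opp; auto) ltac:(intros t Ht; cbv beta; rewrite (Hx t Ht); lra) Ho).
  simpl in B. lra.
Qed.

Lemma omega_props w x (hw : -1/3 < w < 1) (hsol : is_solution w x) (h0 : B_IX (x 0)) p :
  omega_limit x p -> admissible p /\ 0 <= sN1 p /\ 0 <= sN2 p /\ 0 <= sN3 p /\ 0 <= sH p.
Proof.
  intros Ho. assert (B := inv_BIX w x hw hsol h0).
  split; [split; [|split]|split; [|split; [|split]]].
  - apply (closed_eq x (fun q => sS1 q + sS2 q + sS3 q)); auto. sctac.
    intros t Ht. apply (B t Ht).
  - assert (h := closed_eq x (fun q => sH q ^ 2 + / 6 * (sN1 q * sN2 q + sN1 q * sN3 q + sN2 q * sN3 q) - 1) p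
      ltac:(sctac) ltac:(intros t Ht; destruct (B t Ht) as [[_ [hg _]] _]; lra) Ho). simpl in h. lra.
  - apply (closed_ge x Omega); auto. unfold Omega, Sig2; sctac. intros t Ht. apply (B t Ht).
  - apply (closed_ge x sN1); auto. sctac. intros t Ht. destruct (B t Ht) as [_ [h _]]; lra.
  - apply (closed_ge x sN2); auto. sctac. intros t Ht. destruct (B t Ht) as [_ [_ [h _]]]; lra.
  - apply (closed_ge x sN3); auto. sctac. intros t Ht. destruct (B t Ht) as [_ [_ [_ [h _]]]]; lra.
  - apply (closed_ge x sH); auto. sctac. intros t Ht. destruct (B t Ht) as [_ [_ [_ [_ h]]]]; lra.
Qed.

Lemma S_nonzero p : admissible p -> 0 < sN1 p -> 0 < sN2 p -> 0 < sN3 p ->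
  sS1 p = 0 -> sS2 p = 0 -> sS3 p = 0 -> Omega p = 0 ->
  S3_1 p <> 0 \/ S3_2 p <> 0 \/ S3_3 p <> 0.
Proof.
  intros [_ [hg _]] n1 n2 n3 s1 s2 s3 hO.
  destruct (Req_dec (S3_1 p) 0) as [e1|]; [|left; auto].
  destruct (Req_dec (S3_2 p) 0) as [e2|]; [|right; left; auto].
  destruct (Req_dec (S3_3 p) 0) as [e3|]; [|right; right; auto].
  exfalso.
  assert (a12 : (sN1 p - sN2 p) * (sN1 p + sN2 p - sN3 p) = 0).
  { replace ((sN1 p - sN2 p) * (sN1 p + sN2 p - sN3 p)) with (S3_1 p - S3_2 p) by (unfold S3_1, S3_2; field). lra. }
  assert (a23 : (sN2 p - sN3 p) * (sN2 p + sN3 p - sN1 p) = 0).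
  { replace ((sN2 p - sN3 p) * (sN2 p + sN3 p - sN1 p)) with (S3_2 p - S3_3 p) by (unfold S3_3, S3_2; field). lra. }
  assert (a13 : (sN1 p - sN3 p) * (sN1 p + sN3 p - sN2 p) = 0).
  { replace ((sN1 p - sN3 p) * (sN1 p + sN3 p - sN2 p)) with (S3_1 p - S3_3 p) by (unfold S3_1, S3_3; field). lra. }
  assert (eq12 : sN1 p = sN2 p /\ sN2 p = sN3 p).
  { apply Rmult_integral in a12. apply Rmult_integral in a23. apply Rmult_integral in a13.
    destruct a12; destruct a23; destruct a13; split; lra. }
  destruct eq12 as [e12 e23].
  unfold Omega, Sig2 in hO. rewrite s1, s2, s3 in hO. rewrite <- e23, <- e12 in hO, hg.
  assert (h := pow2_ge_0 (sH p)). nra.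
Qed.


Definition Mf (p : st) := sN1 p * sN2 p * sN3 p.
Definition Df (p : st) := Mf p / sH p ^ 3.

Lemma D_deriv w x (hw : -1/3 < w < 1) (hsol : is_solution w x) (h0 : B_IX (x 0)) t : 0 <= t ->
  derivable_pt_lim (fun u => Df (x u)) t (- 3 * qbar w (x t) * Mf (x t) / sH (x t) ^ 4).
Proof.
  intros Ht. getsol hsol t Ht. assert (hH := inv_H w x hw hsol h0 t Ht).
  assert (hs := inv_sum w x hsol h0 t Ht).
  unfold Df, Mf. eapply dl_eq. apply dl_div. dtac. dtac. apply pow_nonzero; lra.
  unfold Rsqr, fH, fN1, fN2, fN3, Fbar. simpl.
  replace (sS3 (x t)) with (- (sS1 (x t) + sS2 (x t))) by lra. field. lra.
Qed.

Lemma div4 h y : 0 < h <= 1 -> 0 <= y -> y <= y / h ^ 4.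
Proof.
  intros Hh Hy. assert (h4 : 0 < h ^ 4) by (apply pow_lt; lra).
  assert (h41 : h ^ 4 <= 1). { replace 1 with (1 ^ 4) by ring. apply pow_incr; lra. }
  apply (Rmult_le_reg_r (h ^ 4)); auto. field_simplify; [|lra]. nra.
Qed.

Lemma D_drop w x (hw : -1/3 < w < 1) (hsol : is_solution w x) (h0 : B_IX (x 0)) a b c m :
  0 <= a <= b -> 0 <= c -> 0 <= m ->
  (forall t, a <= t <= b -> c <= qbar w (x t) /\ m <= Mf (x t)) ->
  Df (x b) <= Df (x a) - 3 * c * m * (b - a).
Proof.
  intros Hab Hc Hm Hq.
  assert (S := slope_lb (fun u => - Df (x u)) (fun u => - (- 3 * qbar w (x u) * Mf (x u) / sH (x u) ^ 4)) a b (3 * c * m) ltac:(lra)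
     ltac:(intros t Ht; apply dl_opp; apply (D_deriv w x hw hsol h0); lra)).
  cut (3 * c * m * (b - a) <= - Df (x b) - - Df (x a)). lra.
  apply S. intros t Ht. destruct (Hq t Ht) as [q1 m1].
  assert (hb := traj_bnds w x hw hsol h0 t ltac:(lra)).
  assert (hH := inv_H w x hw hsol h0 t ltac:(lra)).
  assert (hH1 : sH (x t) <= 1) by apply (bH _ _ hb).
  assert (y0 : c * m <= qbar w (x t) * Mf (x t)) by (apply Rmult_le_compat; lra).
  assert (y1 := div4 (sH (x t)) (qbar w (x t) * Mf (x t)) ltac:(lra) ltac:(nra)).
  replace (- (- 3 * qbar w (x t) * Mf (x t) / sH (x t) ^ 4)) with (3 * (qbar w (x t) * Mf (x t) / sH (x t) ^ 4)) by (field; lra).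
  lra.
Qed.

Lemma Df_pos w x (hw : -1/3 < w < 1) (hsol : is_solution w x) (h0 : B_IX (x 0)) t : 0 <= t -> 0 <= Df (x t).
Proof.
  intros Ht. destruct (inv_BIX w x hw hsol h0 t Ht) as [_ [n1 [n2 [n3 hH]]]].
  unfold Df, Mf. apply Rle_mult_inv_pos. apply Rmult_le_pos; [apply Rmult_le_pos|]; lra.
  apply pow_lt; lra.
Qed.

Lemma no_good w x (hw : -1/3 < w < 1) (hsol : is_solution w x) (h0 : B_IX (x 0)) c m L :
  0 < c -> 0 < m -> 0 < L ->
  (forall T, exists a, T <= a /\ 0 <= a /\ forall t, a <= t <= a + L -> c <= qbar w (x t) /\ m <= Mf (x t)) ->
  False.
Proof.
  intros Hc Hm HL Hg.
  set (eta := 3 * c * m * L).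
  assert (Heta : 0 < eta) by (unfold eta; repeat apply Rmult_lt_0_compat; lra).
  assert (Hq0 : forall t, 0 <= t -> 0 <= qbar w (x t)).
  { intros t Ht. apply q_nonneg; [lra|]. apply (inv_BIX w x hw hsol h0 t Ht). }
  assert (HM0 : forall t, 0 <= t -> 0 <= Mf (x t)).
  { intros t Ht. destruct (inv_BIX w x hw hsol h0 t Ht) as [_ [n1 [n2 [n3 hH]]]]. unfold Mf.
    apply Rmult_le_pos; [apply Rmult_le_pos|]; lra. }
  assert (It : forall n, exists t, 0 <= t /\ Df (x t) <= Df (x 0) - INR n * eta).
  { induction n as [|n [t [Ht IH]]].
    - exists 0. simpl. lra.
    - destruct (Hg t) as [a [Hta [Ha Hint]]].
      assert (d1 := D_drop w x hw hsol h0 t a 0 0 ltac:(lra) ltac:(lra) ltac:(lra)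
        ltac:(intros u Hu; split; [apply Hq0|apply HM0]; lra)).
      assert (d2 := D_drop w x hw hsol h0 a (a + L) c m ltac:(lra) ltac:(lra) ltac:(lra) Hint).
      exists (a + L). split; [lra|]. rewrite S_INR. unfold eta in *. nra. }
  destruct (INR_archimed eta (Df (x 0)) Heta) as [n Hn].
  destruct (It n) as [t [Ht Hd]]. assert (hh := Df_pos w x hw hsol h0 t Ht). lra.
Qed.


Lemma near w x (hw : -1/3 < w < 1) (hsol : is_solution w x) (h0 : B_IX (x 0)) p dd :
  omega_limit x p -> 0 < dd ->
  exists L, 0 < L /\ forall T, exists a, T <= a /\ 0 <= a /\
    forall t, a <= t <= a + L -> dist2 p (x t) < dd.
Proof.
  intros Ho Hdd. set (L := Rmin 1 (dd / 2240000)).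
  assert (HL : 0 < L) by (unfold L; apply Rmin_glb_lt; lra).
  assert (HL1 : L <= 1) by apply Rmin_l. assert (HL2 : L <= dd / 2240000) by apply Rmin_r.
  exists L. split; auto. intros T.
  destruct (Ho (dd / 4) (Rmax T 0) ltac:(lra)) as [a [Ha Hd]].
  assert (h1 := Rmax_l T 0). assert (h2 := Rmax_r T 0).
  exists a. split; [lra|]. split; [lra|]. intros t Ht.
  rewrite dist2_sym. eapply Rle_lt_trans. apply (dist2_tri _ (x a)).
  assert (Hm := motion w x hw hsol h0 a t ltac:(lra)).
  assert ((200 * (t - a)) ^ 2 <= 40000 * L) by nra.
  lra.
Qed.

Lemma subint (f f' : R -> R) a L k : 0 < L -> 0 < k ->
  (forall t, a <= t <= a + L -> derivable_pt_lim f t (f' t)) ->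
  (forall t, a <= t <= a + L -> k <= f' t) ->
  exists b, a <= b /\ b + L / 4 <= a + L /\ forall t, b <= t <= b + L / 4 -> (k * L / 4) ^ 2 <= f t ^ 2.
Proof.
  intros HL Hk Hd Hf.
  destruct (Rle_dec 0 (f (a + L / 2))) as [Hp|Hn].
  - exists (a + 3 * L / 4). split; [lra|]. split; [lra|]. intros t Ht.
    assert (S := slope_lb f f' (a + L / 2) t k ltac:(lra) ltac:(intros; apply Hd; lra) ltac:(intros; apply Hf; lra)).
    assert (k * (L / 4) <= k * (t - (a + L / 2))) by (apply Rmult_le_compat_l; lra).
    assert (k * (L / 4) <= f t) by lra. replace (k * L / 4) with (k * (L / 4)) by field.
    assert (0 < k * (L / 4)) by (apply Rmult_lt_0_compat; lra). nra.
  - exists a. split; [lra|]. split; [lra|]. intros t Ht.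
    assert (S := slope_lb f f' t (a + L / 2) k ltac:(lra) ltac:(intros; apply Hd; lra) ltac:(intros; apply Hf; lra)).
    assert (k * (L / 4) <= k * (a + L / 2 - t)) by (apply Rmult_le_compat_l; lra).
    assert (f t <= - (k * (L / 4))) by lra. replace (k * L / 4) with (k * (L / 4)) by field.
    assert (0 < k * (L / 4)) by (apply Rmult_lt_0_compat; lra). nra.
Qed.

Lemma case2 w x (hw : -1/3 < w < 1) (hsol : is_solution w x) (h0 : B_IX (x 0)) p (sig fs : st -> R) :
  omega_limit x p ->
  (forall t, 0 <= t -> derivable_pt_lim (fun u => sig (x u)) t (fs (x t))) ->
  scont fs p -> fs p <> 0 ->
  (forall t, 0 <= t -> sig (x t) ^ 2 / 3 <= qbar w (x t)) ->
  scont Mf p -> 0 < Mf p -> False.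
Proof.
  intros Ho Hd Hcf Hs Hq HcM HM.
  set (k := Rabs (fs p) / 2). assert (Hk : 0 < k) by (unfold k; assert (h := Rabs_pos_lt _ Hs); lra).
  destruct (Hcf k Hk) as [d1 [Hd1 H1]]. destruct (HcM (Mf p / 2) ltac:(lra)) as [d2 [Hd2 H2]].
  destruct (near w x hw hsol h0 p (Rmin d1 d2) Ho ltac:(apply Rmin_glb_lt; auto)) as [L [HL Hnear]].
  apply (no_good w x hw hsol h0 ((k * L / 4) ^ 2 / 3) (Mf p / 2) (L / 4)).
  { assert (0 < k * L / 4) by (apply Rmult_lt_0_compat; [apply Rmult_lt_0_compat|]; lra). nra. }
  lra. lra.
  intros T. destruct (Hnear T) as [a [HTa [Ha Hint]]].
  assert (HI : forall t, a <= t <= a + L -> Rabs (fs (x t) - fs p) < k /\ Rabs (Mf (x t) - Mf p) < Mf p / 2).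
  { intros t Ht. specialize (Hint t Ht). split.
    apply H1. eapply Rlt_le_trans; [exact Hint|apply Rmin_l].
    apply H2. eapply Rlt_le_trans; [exact Hint|apply Rmin_r]. }
  assert (Hsub : exists b, a <= b /\ b + L / 4 <= a + L /\
            forall t, b <= t <= b + L / 4 -> (k * L / 4) ^ 2 <= sig (x t) ^ 2).
  { destruct (Rlt_dec 0 (fs p)) as [Hpos|Hneg].
    - apply (subint (fun u => sig (x u)) (fun u => fs (x u))); auto.
      + intros t Ht; apply Hd; lra.
      + intros t Ht. destruct (HI t Ht) as [A _].
        assert (E : k = fs p / 2) by (unfold k; rewrite Rabs_right; lra). rewrite E in A |- *.
        unfold Rabs in A; destruct Rcase_abs; lra.
    - destruct (subint (fun u => - sig (x u)) (fun u => - fs (x u)) a L k HL Hk) as [b [B1 [B2 B3]]].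
      + intros t Ht; apply dl_opp; apply Hd; lra.
      + intros t Ht. destruct (HI t Ht) as [A _].
        assert (fs p < 0) by (destruct (Rtotal_order (fs p) 0) as [|[|]]; lra).
        assert (E : k = - fs p / 2) by (unfold k; rewrite Rabs_left; lra). rewrite E in A |- *.
        unfold Rabs in A; destruct Rcase_abs; lra.
      + exists b. split; auto. split; auto. intros t Ht. specialize (B3 t Ht). simpl in B3. nra. }
  destruct Hsub as [b [B1 [B2 B3]]].
  exists b. split; [lra|]. split; [lra|]. intros t Ht. split.
  - specialize (B3 t Ht). specialize (Hq t ltac:(lra)). lra.
  - destruct (HI t ltac:(lra)) as [_ A]. unfold Rabs in A; destruct Rcase_abs; lra.
Qed.

Lemma q_ge_sig w p : -1/3 < w -> 0 <= Omega p ->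
  sS1 p ^ 2 / 3 <= qbar w p /\ sS2 p ^ 2 / 3 <= qbar w p /\ sS3 p ^ 2 / 3 <= qbar w p.
Proof.
  intros hw hO. unfold qbar, Sig2.
  assert (a1 := pow2_ge_0 (sS1 p)). assert (a2 := pow2_ge_0 (sS2 p)). assert (a3 := pow2_ge_0 (sS3 p)).
  assert (0 <= / 2 * (1 + 3 * w) * Omega p) by (apply Rmult_le_pos; lra).
  repeat split; lra.
Qed.

Lemma M_zero w x (hw : -1/3 < w < 1) (hsol : is_solution w x) (h0 : B_IX (x 0)) p :
  omega_limit x p -> Mf p = 0.
Proof.
  intros Ho. destruct (omega_props w x hw hsol h0 p Ho) as [hadm [n1 [n2 [n3 hH]]]].
  assert (HcM : scont Mf p) by (unfold Mf; sctac).
  apply NNPP. intros HM0.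
  assert (HM : 0 < Mf p).
  { assert (0 <= Mf p) by (unfold Mf; apply Rmult_le_pos; [apply Rmult_le_pos|]; lra). lra. }
  assert (m1 : 0 < sN1 p). { destruct n1 as [|e]; auto. exfalso; apply HM0; unfold Mf; rewrite <- e; ring. }
  assert (m2 : 0 < sN2 p). { destruct n2 as [|e]; auto. exfalso; apply HM0; unfold Mf; rewrite <- e; ring. }
  assert (m3 : 0 < sN3 p). { destruct n3 as [|e]; auto. exfalso; apply HM0; unfold Mf; rewrite <- e; ring. }
  assert (HcQ : scont (qbar w) p) by (unfold qbar, Omega, Sig2; sctac).
  assert (Hq0 := q_nonneg w p ltac:(lra) (proj2 (proj2 hadm))).
  assert (QX : forall t, 0 <= t -> Omega (x t) >= 0).
  { intros t Ht. destruct (inv_BIX w x hw hsol h0 t Ht) as [[_ [_ h]] _]. lra. }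
  destruct Hq0 as [Hqp|Hqz].
  -
    destruct (HcQ (qbar w p / 2) ltac:(lra)) as [d1 [Hd1 H1]].
    destruct (HcM (Mf p / 2) ltac:(lra)) as [d2 [Hd2 H2]].
    destruct (near w x hw hsol h0 p (Rmin d1 d2) Ho ltac:(apply Rmin_glb_lt; auto)) as [L [HL Hnear]].
    apply (no_good w x hw hsol h0 (qbar w p / 2) (Mf p / 2) L); try lra.
    intros T. destruct (Hnear T) as [a [HTa [Ha Hint]]]. exists a. split; auto. split; auto.
    intros t Ht. specialize (Hint t Ht). split.
    + assert (A := H1 _ (Rlt_le_trans _ _ _ Hint (Rmin_l _ _))). unfold Rabs in A; destruct Rcase_abs; lra.
    + assert (A := H2 _ (Rlt_le_trans _ _ _ Hint (Rmin_r _ _))). unfold Rabs in A; destruct Rcase_abs; lra.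
  -
    destruct hadm as [hs [hg hO]].
    assert (hS := Sig2_nonneg p).
    assert (hz : Sig2 p = 0 /\ Omega p = 0).
    { unfold qbar in Hqz. assert (0 <= / 2 * (1 + 3 * w) * Omega p) by (apply Rmult_le_pos; lra).
      split. lra. assert (/ 2 * (1 + 3 * w) * Omega p = 0) by lra.
      apply Rmult_integral in H0. destruct H0; [|auto]. exfalso. apply Rmult_integral in H0; destruct H0; lra. }
    destruct hz as [hS0 hO0].
    assert (s0 : sS1 p = 0 /\ sS2 p = 0 /\ sS3 p = 0).
    { unfold Sig2 in hS0. assert (a1 := pow2_ge_0 (sS1 p)). assert (a2 := pow2_ge_0 (sS2 p)).
      assert (a3 := pow2_ge_0 (sS3 p)). repeat split; nra. }
    destruct s0 as [s1 [s2 s3]].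
    assert (QS := fun t Ht => q_ge_sig w (x t) ltac:(lra) (Rge_le _ _ (QX t Ht))).
    destruct (S_nonzero p (conj hs (conj hg hO)) m1 m2 m3 s1 s2 s3 hO0) as [e|[e|e]].
    + apply (case2 w x hw hsol h0 p sS1 (fS1 w) Ho); auto.
      * intros t Ht; apply (hsol t Ht).
      * unfold fS1, qbar, Omega, Sig2, Fbar, S3_1; sctac.
      * unfold fS1. rewrite s1. replace (0 * ((2 - qbar w p) * sH p - Fbar p) + S3_1 p) with (S3_1 p) by ring. auto.
      * intros t Ht; apply (QS t Ht).
    + apply (case2 w x hw hsol h0 p sS2 (fS2 w) Ho); auto.
      * intros t Ht; apply (hsol t Ht).
      * unfold fS2, qbar, Omega, Sig2, Fbar, S3_2; sctac.
      * unfold fS2. rewrite s2. replace (0 * ((2 - qbar w p) * sH p - Fbar p) + S3_2 p) with (S3_2 p) by ring. auto.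
      * intros t Ht; apply (QS t Ht).
    + apply (case2 w x hw hsol h0 p sS3 (fS3 w) Ho); auto.
      * intros t Ht; apply (hsol t Ht).
      * unfold fS3, qbar, Omega, Sig2, Fbar, S3_3; sctac.
      * unfold fS3. rewrite s3. replace (0 * ((2 - qbar w p) * sH p - Fbar p) + S3_3 p) with (S3_3 p) by ring. auto.
      * intros t Ht; apply (QS t Ht).
Qed.


Lemma approx H S1 S2 S3 a b eps : 0 <= a -> 0 <= b -> 0 <= H -> H ^ 2 + a * b / 6 = 1 ->
  (S1 ^ 2 + S2 ^ 2 + S3 ^ 2) / 6 + (a ^ 2 + b ^ 2) / 12 <= 1 -> 0 < eps ->
  exists mu a' b' H', 0 < a' /\ 0 < b' /\ 0 < H' /\ H' ^ 2 + a' * b' / 6 = 1 /\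
    mu ^ 2 * (S1 ^ 2 + S2 ^ 2 + S3 ^ 2) / 6 + (a' ^ 2 + b' ^ 2) / 12 <= 1 /\
    (H - H') ^ 2 + (S1 - mu * S1) ^ 2 + (S2 - mu * S2) ^ 2 + (S3 - mu * S3) ^ 2 +
    (a - a') ^ 2 + (b - b') ^ 2 < eps.
Proof.
  intros ha hb hH hg hO heps.
  set (X := S1 ^ 2 + S2 ^ 2 + S3 ^ 2).
  assert (hX : 0 <= X) by (unfold X; assert (h1 := pow2_ge_0 S1); assert (h2 := pow2_ge_0 S2); assert (h3 := pow2_ge_0 S3); lra).
  fold X in hO.
  assert (a4 : a <= 4) by nra. assert (b4 : b <= 4) by nra.
  assert (ab6 : a * b <= 6) by nra. assert (X6 : X <= 6) by nra.
  set (eta := Rmin (1/2) (eps / 100)).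
  assert (he : 0 < eta) by (unfold eta; apply Rmin_glb_lt; lra).
  assert (he1 : eta <= 1/2) by apply Rmin_l. assert (he2 : eta <= eps / 100) by apply Rmin_r.
  set (mu := 1 - eta). set (e := eta / 10).
  set (a' := mu * a + e). set (b' := mu * b + e).
  assert (hmu : 1/2 <= mu < 1) by (unfold mu; lra).
  assert (ha' : 0 < a') by (unfold a', e; nra). assert (hb' : 0 < b') by (unfold b', e; nra).
  assert (hab' : a' * b' <= 6 * mu ^ 2 + 9 * e).
  { unfold a', b'. assert (mu ^ 2 * (a * b) <= mu ^ 2 * 6) by (apply Rmult_le_compat_l; nra).
    assert (e <= 1/20) by (unfold e; lra). assert (0 < e) by (unfold e; lra).
    replace ((mu * a + e) * (mu * b + e)) with (mu ^ 2 * (a * b) + mu * e * (a + b) + e * e) by ring.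
    assert (mu * e * (a + b) <= 1 * e * 8). { apply Rmult_le_compat; try nra. }
    assert (e * e <= e) by nra. lra. }
  assert (hmu2 : mu ^ 2 = 1 - 2 * eta + eta ^ 2) by (unfold mu; ring).
  assert (he3 : eta ^ 2 <= eta / 2) by nra.
  assert (hpos : 0 < 1 - a' * b' / 6) by (unfold e in *; lra).
  set (H' := sqrt (1 - a' * b' / 6)).
  assert (hH' : 0 < H') by (apply sqrt_lt_R0; auto).
  assert (hH'2 : H' ^ 2 = 1 - a' * b' / 6) by (unfold H'; rewrite <- Rsqr_pow2; apply Rsqr_sqrt; lra).
  exists mu, a', b', H'. split; auto. split; auto. split; auto. split; [lra|]. split.
  - assert (e <= 1/20) by (unfold e; lra). assert (0 < e) by (unfold e; lra).
    assert (A1 : a' ^ 2 <= mu ^ 2 * a ^ 2 + 9 * e).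
    { unfold a'. replace ((mu * a + e) ^ 2) with (mu ^ 2 * a ^ 2 + 2 * (mu * e * a) + e * e) by ring.
      assert (mu * e * a <= 1 * e * 4) by (apply Rmult_le_compat; try nra). assert (e * e <= e) by nra. lra. }
    assert (B1 : b' ^ 2 <= mu ^ 2 * b ^ 2 + 9 * e).
    { unfold b'. replace ((mu * b + e) ^ 2) with (mu ^ 2 * b ^ 2 + 2 * (mu * e * b) + e * e) by ring.
      assert (mu * e * b <= 1 * e * 4) by (apply Rmult_le_compat; try nra). assert (e * e <= e) by nra. lra. }
    assert (C : mu ^ 2 * (X / 6 + (a ^ 2 + b ^ 2) / 12) <= mu ^ 2 * 1) by (apply Rmult_le_compat_l; nra).
    assert (E : mu ^ 2 * X / 6 = mu ^ 2 * (X / 6 + (a ^ 2 + b ^ 2) / 12) - (mu ^ 2 * a ^ 2 + mu ^ 2 * b ^ 2) / 12) by field.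
    rewrite E. unfold e in *. lra.
  - assert (e <= 1/20) by (unfold e; lra). assert (0 < e) by (unfold e; lra).
    assert (D1 : (H - H') ^ 2 <= Rabs (H ^ 2 - H' ^ 2)).
    { unfold Rabs; destruct Rcase_abs; nra. }
    assert (D2 : Rabs (H ^ 2 - H' ^ 2) <= 3 * eta).
    { apply ab_of. rewrite hH'2. assert (hHsq : H ^ 2 = 1 - a * b / 6) by lra. rewrite hHsq.
      unfold a', b'. replace ((mu * a + e) * (mu * b + e)) with (mu ^ 2 * (a * b) + mu * e * (a + b) + e * e) by ring.
      assert (mu * e * (a + b) <= 1 * e * 8) by (apply Rmult_le_compat; try nra).
      assert (0 <= mu * e * (a + b)) by (apply Rmult_le_pos; nra).
      assert (e * e <= e) by nra. assert (0 <= e * e) by nra.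
      assert ((1 - mu ^ 2) * (a * b) <= (2 * eta) * 6) by (apply Rmult_le_compat; nra).
      assert (0 <= (1 - mu ^ 2) * (a * b)) by (apply Rmult_le_pos; nra).
      unfold e in *. split; lra. }
    assert (D3 : (S1 - mu * S1) ^ 2 + (S2 - mu * S2) ^ 2 + (S3 - mu * S3) ^ 2 = eta ^ 2 * X) by (unfold mu, X; ring).
    assert (D4 : (a - a') ^ 2 <= 40 * eta ^ 2) by (unfold a', mu, e; nra).
    assert (D5 : (b - b') ^ 2 <= 40 * eta ^ 2) by (unfold b', mu, e; nra).
    assert (eta ^ 2 <= eta) by nra. nra.
Qed.

Lemma closure_lem p : admissible p -> 0 <= sN1 p -> 0 <= sN2 p -> 0 <= sN3 p -> 0 <= sH p ->
  Mf p = 0 -> in_closure B_VII0 p.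
Proof.
  intros [hs [hg hO]] n1 n2 n3 hH hM eps heps.
  unfold Mf in hM. apply Rmult_integral in hM. destruct hM as [hM|h3].
  apply Rmult_integral in hM. destruct hM as [h1|h2].
  -
    unfold Omega, Sig2 in hO. rewrite h1 in hg, hO.
    destruct (approx (sH p) (sS1 p) (sS2 p) (sS3 p) (sN2 p) (sN3 p) eps n2 n3 hH ltac:(lra) ltac:(lra) heps)
      as [mu [a' [b' [H' [A1 [A2 [A3 [A4 [A5 A6]]]]]]]]].
    exists (mkst H' (mu * sS1 p) (mu * sS2 p) (mu * sS3 p) 0 a' b'). split.
    + right; left. unfold B_N2N3, admissible, Omega, Sig2; simpl.
      split; [split; [|split]|]. 
      * replace (mu * sS1 p + mu * sS2 p + mu * sS3 p) with (mu * (sS1 p + sS2 p + sS3 p)) by ring. rewrite hs; ring.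
      * lra.
      * replace ((mu * sS1 p) ^ 2 + (mu * sS2 p) ^ 2 + (mu * sS3 p) ^ 2) with (mu ^ 2 * (sS1 p ^ 2 + sS2 p ^ 2 + sS3 p ^ 2)) by ring. lra.
      * repeat split; lra.
    + unfold dist2; simpl. rewrite h1. lra.
  -
    unfold Omega, Sig2 in hO. rewrite h2 in hg, hO.
    destruct (approx (sH p) (sS1 p) (sS2 p) (sS3 p) (sN3 p) (sN1 p) eps n3 n1 hH ltac:(lra) ltac:(lra) heps)
      as [mu [a' [b' [H' [A1 [A2 [A3 [A4 [A5 A6]]]]]]]]].
    exists (mkst H' (mu * sS1 p) (mu * sS2 p) (mu * sS3 p) b' 0 a'). split.
    + right; right. unfold B_N3N1, admissible, Omega, Sig2; simpl.
      split; [split; [|split]|].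
      * replace (mu * sS1 p + mu * sS2 p + mu * sS3 p) with (mu * (sS1 p + sS2 p + sS3 p)) by ring. rewrite hs; ring.
      * lra.
      * replace ((mu * sS1 p) ^ 2 + (mu * sS2 p) ^ 2 + (mu * sS3 p) ^ 2) with (mu ^ 2 * (sS1 p ^ 2 + sS2 p ^ 2 + sS3 p ^ 2)) by ring. lra.
      * repeat split; lra.
    + unfold dist2; simpl. rewrite h2. lra.
  -
    unfold Omega, Sig2 in hO. rewrite h3 in hg, hO.
    destruct (approx (sH p) (sS1 p) (sS2 p) (sS3 p) (sN1 p) (sN2 p) eps n1 n2 hH ltac:(lra) ltac:(lra) heps)
      as [mu [a' [b' [H' [A1 [A2 [A3 [A4 [A5 A6]]]]]]]]].
    exists (mkst H' (mu * sS1 p) (mu * sS2 p) (mu * sS3 p) a' b' 0). split.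
    + left. unfold B_N1N2, admissible, Omega, Sig2; simpl.
      split; [split; [|split]|].
      * replace (mu * sS1 p + mu * sS2 p + mu * sS3 p) with (mu * (sS1 p + sS2 p + sS3 p)) by ring. rewrite hs; ring.
      * lra.
      * replace ((mu * sS1 p) ^ 2 + (mu * sS2 p) ^ 2 + (mu * sS3 p) ^ 2) with (mu ^ 2 * (sS1 p ^ 2 + sS2 p ^ 2 + sS3 p ^ 2)) by ring. lra.
      * repeat split; lra.
    + unfold dist2; simpl. rewrite h3. lra.
Qed.

Theorem lemma2 (w : R) (hw : -1/3 < w < 1) (x : R -> st)
  (hsol : is_solution w x) (h0 : B_IX (x 0)) :
  (exists p, omega_limit x p) /\
  (forall p, omega_limit x p -> in_closure B_VII0 p).
Proof.
  split.
  - apply BW. intros t Ht. destruct (traj_bnds w x hw hsol h0 t Ht) as [hH h1 h2 h3 n1 n2 n3 _].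
    repeat split; try (apply ab_of; lra); lra.
  - intros p Ho. destruct (omega_props w x hw hsol h0 p Ho) as [ha [n1 [n2 [n3 hH]]]].
    apply closure_lem; auto. apply (M_zero w x hw hsol h0 p Ho).
Qed.
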